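(* Let $n,m\in\mathbb{N}$ and $f,g:\mathbb{F}_2^n\to\mathbb{F}_2$. Then for every $\mathbf{z}\in\mathbb{F}_2^n$, $$C^{(m)}_{f,g}(\mathbf{z})=\zeta_m^{wt(\mathbf{z})}\sum_{\mathbf{u}\in\mathbb{F}_2^n}\mathcal{H}^{(m)}_f(\mathbf{u})\,\overline{\mathcal{H}^{(m)}_g(\mathbf{u})}\,(-1)^{\mathbf{u}\cdot\mathbf{z}}.$$
   Context: $\zeta_m=e^{2\pi i/m}$; $wt$ is Hamming weight; $\mathbf{x}\cdot\mathbf{y}=\bigoplus_i x_iy_i\in\mathbb{F}_2$; $\mathbf{x}\odot\mathbf{y}=\sum_i x_iy_i$ computed in the integers. The $m$-Hadamard transform is $\mathcal{H}^{(m)}_f(\boldsymbol{\omega})=2^{-n/2}\sum_{\mathbf{x}\in\mathbb{F}_2^n}(-1)^{f(\mathbf{x})\oplus\mathbf{x}\cdot\boldsymbol{\omega}}\zeta_m^{wt(\mathbf{x})}$, and the $m$-crosscorrelation is $C^{(m)}_{f,g}(\mathbf{y})=\sum_{\mathbf{x}\in\mathbb{F}_2^n}(-1)^{f(\mathbf{x})\oplus g(\mathbf{x}\oplus\mathbf{y})}(\zeta_m^2)^{\mathbf{x}\odot\mathbf{y}}$. *)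

(* Defs.v *)
From mathcomp Require Import all_boot all_order all_algebra.
From mathcomp Require Import all_classical all_reals all_analysis.
From mathcomp Require Import complex.
Set Implicit Arguments. Unset Strict Implicit. Unset Printing Implicit Defensive.
Import Order.TTheory GRing.Theory Num.Theory.
Local Open Scope ring_scope.
Local Open Scope complex_scope.

(* Vectors of F_2^n are row vectors 'rV['F_2]_n; x (+) y is x + y. *)

Definition zeta (R : realType) (m : nat) : R[i] :=
  (cos (2 * pi / m%:R)) +i* (sin (2 * pi / m%:R)).

(* (-1)^a for a in F_2, as a complex number *)
Definition sgn (R : realType) (a : 'F_2) : R[i] := if a == 0 then 1 else -1.

Definition wt n (x : 'rV['F_2]_n) : nat := #|[set i | x ord0 i != 0]|.

Definition dotF2 n (x y : 'rV['F_2]_n) : 'F_2 := \sum_(i < n) x ord0 i * y ord0 i.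

(* integer inner product x (.) y = sum_i x_i y_i computed in the integers *)
Definition dotZ n (x y : 'rV['F_2]_n) : nat :=
  (\sum_(i < n) nat_of_bool ((x ord0 i != 0%R) && (y ord0 i != 0%R)))%N.

Definition mHadamard (R : realType) (m n : nat) (f : 'rV['F_2]_n -> 'F_2)
    (w : 'rV['F_2]_n) : R[i] :=
  ((Num.sqrt (2 : R))^-1 ^+ n)%:C *
  \sum_(x : 'rV['F_2]_n) sgn R (f x + dotF2 x w) * zeta R m ^+ wt x.

Definition mCrosscorr (R : realType) (m n : nat) (f g : 'rV['F_2]_n -> 'F_2)
    (y : 'rV['F_2]_n) : R[i] :=
  \sum_(x : 'rV['F_2]_n) sgn R (f x + g (x + y)) * (zeta R m ^+ 2) ^+ dotZ x y.

(* Main.v *)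
Require Import Defs.
From mathcomp Require Import all_boot all_order all_algebra.
From mathcomp Require Import all_classical all_reals all_analysis.
From mathcomp Require Import complex.
From mathcomp Require Import ring.
Import Order.TTheory GRing.Theory Num.Theory.
Local Open Scope ring_scope.
Local Open Scope complex_scope.

Lemma F2cases (a : 'F_2) : a = 0 \/ a = 1.
Proof. case: a => [[|[|k]] Hk] //. by left; apply: val_inj. by right; apply: val_inj. Qed.
Lemma F2_11 : (1 + 1 : 'F_2) = 0. Proof. by apply: val_inj. Qed.
Lemma F2_10 : (1 : 'F_2) != 0. Proof. by []. Qed.

Lemma sgnD (R : realType) a b : sgn R (a + b) = sgn R a * sgn R b.
Proof.
case: (F2cases a) => ->; case: (F2cases b) => ->;
rewrite /sgn ?addr0 ?add0r ?F2_11 ?eqxx ?(negbTE F2_10) /= ?mulrNN ?mulr1 ?mul1r //.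
Qed.

Lemma sgnJ (R : realType) a : (sgn R a)^* = sgn R a.
Proof. rewrite /sgn; case: ifP => _; by rewrite ?rmorphN rmorph1. Qed.

Lemma zetaJ (R : realType) m : zeta R m * (zeta R m)^* = 1.
Proof.
rewrite /zeta; set a := cos _; set b := sin _.
have h : a ^+ 2 + b ^+ 2 = 1 by apply: cos2Dsin2.
rewrite /conjc /GRing.mul /= mulrN opprK mulrN [b * a]mulrC addNr -!expr2 h.
by [].
Qed.

Lemma dotF2D n (u x y : 'rV['F_2]_n) : dotF2 u (x + y) = dotF2 u x + dotF2 u y.
Proof. rewrite /dotF2 -big_split; apply: eq_bigr => i _; by rewrite !mxE mulrDr. Qed.
Lemma dotF2C n (u x : 'rV['F_2]_n) : dotF2 u x = dotF2 x u.
Proof. rewrite /dotF2; apply: eq_bigr => i _; by rewrite mulrC. Qed.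

Lemma wt_sum n (x : 'rV['F_2]_n) : wt x = (\sum_i ((x ord0 i != 0%R) : nat))%N.
Proof. rewrite /wt cardsE -sum1_card big_mkcond /=; apply: eq_bigr => i _.
by rewrite unfold_in; case: (x ord0 i != 0). Qed.

Lemma wtD n (x z : 'rV['F_2]_n) : (wt x + wt z = wt (x + z) + 2 * dotZ x z)%N.
Proof.
rewrite !wt_sum /dotZ big_distrr -!big_split /=; apply: eq_bigr => i _.
rewrite mxE; case: (F2cases (x ord0 i)) => ->; case: (F2cases (z ord0 i)) => ->;
  by rewrite ?addr0 ?add0r ?F2_11 ?eqxx ?F2_10.
Qed.

Lemma dotF2_0 n (u : 'rV['F_2]_n) : dotF2 u 0 = 0.
Proof. rewrite /dotF2 big1 // => i _; by rewrite mxE mulr0. Qed.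

Lemma charsum (R : realType) n (w : 'rV['F_2]_n) :
  \sum_(u : 'rV['F_2]_n) sgn R (dotF2 u w) = if w == 0 then (2 ^ n)%:R else 0.
Proof.
case: eqP => [->|/eqP nz].
  under eq_bigr => u _ do rewrite dotF2_0 /sgn eqxx.
  by rewrite sumr_const card_mx card_Fp // mul1n.
case: (pickP (fun i => w ord0 i != 0)) => [i Hi|H]; last first.
  case/eqP: nz; apply/matrixP => a b; rewrite (ord1 a) mxE.
  by move: (H b) => /negbFE/eqP.
set e : 'rV['F_2]_n := delta_mx ord0 i.
have de : dotF2 e w = 1.
  rewrite /dotF2 (bigD1 i) //= big1 => [|j Hj]; last by rewrite mxE eqxx (negbTE Hj) mul0r.
  rewrite mxE !eqxx mul1r addr0. by case: (F2cases (w ord0 i)) Hi => ->.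
set S := (X in X = _).
have hS : S = - S.
  rewrite {1}/S (reindex_inj (addrI e)) /= -sumrN; apply: eq_bigr => u _.
  rewrite dotF2C dotF2D (dotF2C _ w e) de (dotF2C _ w u) sgnD /sgn (negbTE F2_10) mulN1r //.
have : S *+ 2 == 0 by rewrite mulr2n {1}hS addNr.
by rewrite mulrn_eq0 /= => /eqP.
Qed.

Lemma oppF2 n (v : 'rV['F_2]_n) : - v = v.
Proof.
apply/matrixP => a b; rewrite mxE; case: (F2cases (v a b)) => ->; first by rewrite oppr0.
by apply: val_inj.
Qed.

Lemma eqF2 n (x y z : 'rV['F_2]_n) : (x + y + z == 0) = (y == x + z).
Proof. by rewrite addrAC addrC -{1}[x + z]oppF2 subr_eq0. Qed.

Lemma cc2 (R : realType) n :
  ((Num.sqrt (2:R))^-1 ^+ n) * ((Num.sqrt (2:R))^-1 ^+ n) * (2 ^ n)%:R = 1 :> R.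
Proof.
rewrite -exprMn -invfM -expr2 sqr_sqrtr ?ler0n // natrX -exprMn mulVf ?pnatr_eq0 // expr1n //.
Qed.

Lemma ccC (R : realType) n :
  ((Num.sqrt (2:R))^-1 ^+ n)%:C * ((Num.sqrt (2:R))^-1 ^+ n)%:C * (2 ^ n)%:R = 1 :> R[i].
Proof.
have := congr1 (fun r : R => r%:C) (cc2 R n).
rewrite !rmorphM rmorph_nat /=. done.
Qed.

Lemma sum_pick (R : realType) (T : finType) (F : T -> R[i]) a k :
  \sum_y F y * (if y == a then k else 0) = F a * k.
Proof. rewrite (bigD1 a) //= eqxx big1 ?addr0 // => y /negbTE ->; by rewrite mulr0. Qed.

Theorem theorem5 (R : realType) (n m : nat) (f g : 'rV['F_2]_n -> 'F_2)
    (z : 'rV['F_2]_n) :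
  mCrosscorr R m f g z =
  zeta R m ^+ wt z *
  \sum_(u : 'rV['F_2]_n)
     mHadamard R m f u * (mHadamard R m g u)^* * sgn R (dotF2 u z).
Proof.
set c := ((Num.sqrt (2:R))^-1 ^+ n)%:C.
set ze := zeta R m.
have step1 : forall u, mHadamard R m f u * (mHadamard R m g u)^* * sgn R (dotF2 u z) =
   c * c * \sum_x \sum_y (sgn R (f x + g y) * ze ^+ wt x * ze^* ^+ wt y)
                         * sgn R (dotF2 u (x + y + z)).
  move=> u; rewrite /mHadamard rmorphM.
  have cJ : Num.Num_conj__canonical__GRing_RMorphism (complex_complex__canonical__Num_ClosedField R) c = c := conjc_real _.
  rewrite -/c cJ rmorph_sum.
  rewrite (mulrACA c _ c _) -[c * c * _ * _]mulrA; congr (_ * _).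
  rewrite !mulr_suml; apply: eq_bigr => x _.
  rewrite mulr_sumr mulr_suml; apply: eq_bigr => y _.
  have rJ : forall x : R[i], Num.Num_conj__canonical__GRing_RMorphism (complex_complex__canonical__Num_ClosedField R) x = x^* by [].
  rewrite rmorphM rmorphXn !rJ sgnJ !sgnD !dotF2D (dotF2C _ x u) (dotF2C _ y u) !sgnD -/ze.
  ring.
under eq_bigr => u _ do rewrite step1.
rewrite -mulr_sumr exchange_big /=.
under eq_bigr => x _ do rewrite exchange_big /=.
under eq_bigr => x _ do under eq_bigr => y _ do rewrite -mulr_sumr charsum eqF2.
under eq_bigr => x _ do rewrite sum_pick.
rewrite mulr_sumr mulr_sumr /mCrosscorr; apply: eq_bigr => x _.
have zz : ze ^+ wt z * ze ^+ wt x * ze^* ^+ wt (x + z) = ze ^+ (2 * dotZ x z).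
  by rewrite -exprD addnC wtD exprD mulrAC -exprMn zetaJ expr1n mul1r.
have cc : c * c * (2 ^ n)%:R = 1 by exact: ccC.
rewrite -/ze -exprM -zz.
transitivity (sgn R (f x + g (x + z)) * (ze ^+ wt z * ze ^+ wt x * ze^* ^+ wt (x + z)) * (c * c * (2 ^ n)%:R)).
  by rewrite cc mulr1.
ring.
Qed.
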